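(* Let $X$ be a compact metric space with metric $d$. If a homeomorphism $f\colon X\to X$ has the contractive shadowing property, then $X$ is a finite set.
   Context: For $\delta>0$, a sequence $(x_i)_{i\ge0}$ is a $\delta$-pseudo orbit of $f$ if $d(f(x_i),x_{i+1})\le\delta$ for all $i\ge0$; it is $\epsilon$-shadowed by $x$ if $d(f^i(x),x_i)\le\epsilon$ for all $i\ge0$. For $L>0$, $f$ has the $L$-Lipschitz shadowing property if there is $\delta_0>0$ such that for every $0<\delta\le\delta_0$, every $\delta$-pseudo orbit of $f$ is $L\delta$-shadowed by some point of $X$. $f$ has the contractive shadowing property if it has the $L$-Lipschitz shadowing property for some $0<L<1$. *)

(* Defs.v *)
From Stdlib Require Import Reals List.
Open Scope R_scope.

Record is_metric {X : Type} (d : X -> X -> R) : Prop := {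
  metric_nonneg : forall x y, 0 <= d x y;
  metric_eq0 : forall x y, d x y = 0 <-> x = y;
  metric_sym : forall x y, d x y = d y x;
  metric_triangle : forall x y z, d x z <= d x y + d y z
}.

Definition metric_open {X : Type} (d : X -> X -> R) (U : X -> Prop) : Prop :=
  forall x, U x -> exists r, 0 < r /\ forall y, d x y < r -> U y.

Definition metric_compact {X : Type} (d : X -> X -> R) : Prop :=
  forall (I : Type) (U : I -> X -> Prop),
    (forall i, metric_open d (U i)) ->
    (forall x, exists i, U i x) ->
    exists l : list I, forall x, exists i, In i l /\ U i x.

Definition metric_continuous {X : Type} (d : X -> X -> R) (f : X -> X) : Prop :=
  forall x eps, 0 < eps -> exists delta, 0 < delta /\
    forall y, d x y < delta -> d (f x) (f y) < eps.

Definition homeomorphism {X : Type} (d : X -> X -> R) (f : X -> X) : Prop :=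
  metric_continuous d f /\
  exists g : X -> X, (forall x, g (f x) = x) /\ (forall y, f (g y) = y) /\
    metric_continuous d g.

Definition pseudo_orbit {X : Type} (d : X -> X -> R) (f : X -> X)
    (delta : R) (xs : nat -> X) : Prop :=
  forall i, d (f (xs i)) (xs (S i)) <= delta.

Definition shadows {X : Type} (d : X -> X -> R) (f : X -> X)
    (eps : R) (x : X) (xs : nat -> X) : Prop :=
  forall i, d (Nat.iter i f x) (xs i) <= eps.

Definition lipschitz_shadowing {X : Type} (d : X -> X -> R) (f : X -> X)
    (L : R) : Prop :=
  exists delta0, 0 < delta0 /\
    forall delta, 0 < delta -> delta <= delta0 ->
      forall xs, pseudo_orbit d f delta xs ->
        exists x, shadows d f (L * delta) x xs.

Definition contractive_shadowing {X : Type} (d : X -> X -> R) (f : X -> X) : Prop :=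
  exists L, 0 < L /\ L < 1 /\ lipschitz_shadowing d f L.

Definition finite_type (X : Type) : Prop :=
  exists l : list X, forall x, In x l.

(* Main.v *)
Require Import Defs.
From Stdlib Require Import Reals List.
From Stdlib Require Import Lra Lia Classical ClassicalEpsilon.
Open Scope R_scope.


Lemma pow_le1 (L : R) (k : nat) : 0 <= L -> L <= 1 -> L ^ k <= 1.
Proof.
  intros H0 H1. induction k as [|k IH]; simpl; [lra|].
  assert (0 <= L ^ k) by (apply pow_le; lra). nra.
Qed.

Lemma pow_S_le (L : R) (k : nat) : 0 <= L -> L <= 1 -> L ^ S k <= L ^ k.
Proof.
  intros H0 H1. simpl. assert (0 <= L ^ k) by (apply pow_le; lra). nra.
Qed.

Lemma d_refl {X} (d : X -> X -> R) (hm : is_metric d) x : d x x = 0.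
Proof. apply (proj2 (metric_eq0 d hm x x)); reflexivity. Qed.

Lemma completeness {X} (d : X -> X -> R) (hm : is_metric d) (hc : metric_compact d)
  (y : nat -> X) (r : nat -> R) :
  (forall k m, (k <= m)%nat -> d (y k) (y m) <= r k) ->
  exists w, forall k, d (y k) w <= r k.
Proof.
  intros H. apply NNPP; intro Hno.
  assert (Hall : forall w, exists k, r k < d (y k) w).
  { intro w. apply NNPP; intro H'. apply Hno. exists w. intro k.
    apply Rnot_lt_le. intro Hk. apply H'. exists k. exact Hk. }
  pose (U := fun (t : X * nat * R) (w : X) =>
    0 < snd t /\ (forall m, (snd (fst t) <= m)%nat -> snd t <= d (y m) (fst (fst t)))
    /\ d (fst (fst t)) w < snd t).
  destruct (hc _ U) as [l Hl].
  - intros t w [H1 [H2 H3]]. exists (snd t - d (fst (fst t)) w). split; [lra|].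
    intros w' Hw'. split; [exact H1|]. split; [exact H2|].
    pose proof (metric_triangle d hm (fst (fst t)) w w'). lra.
  - intro w. destruct (Hall w) as [k Hk]. exists (w, k, d (y k) w - r k).
    unfold U; simpl. split; [lra|]. split.
    + intros m Hm. pose proof (H k m Hm).
      pose proof (metric_triangle d hm (y k) (y m) w). lra.
    + rewrite (d_refl d hm). lra.
  - pose (M := fold_right (fun t acc => Nat.max (snd (fst t)) acc) 0%nat l).
    assert (HM : forall t, In t l -> (snd (fst t) <= M)%nat).
    { unfold M. clear. induction l as [|a l IH]; simpl; [tauto|].
      intros t [->|Ht]; [lia|]. specialize (IH t Ht). lia. }
    destruct (Hl (y M)) as [t [Ht [H1 [H2 H3]]]].
    specialize (H2 M (HM t Ht)).
    rewrite (metric_sym d hm) in H3. lra.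
Qed.

Lemma iter_cont {X} (d : X -> X -> R) (f : X -> X) (hf : metric_continuous d f) :
  forall J w eta, 0 < eta -> exists rho, 0 < rho /\
    forall u, d w u < rho -> d (Nat.iter J f w) (Nat.iter J f u) < eta.
Proof.
  induction J as [|J IH]; intros w eta Heta.
  - exists eta. simpl. auto.
  - destruct (hf (Nat.iter J f w) eta Heta) as [d1 [Hd1 H1]].
    destruct (IH w d1 Hd1) as [rho [Hr H2]].
    exists rho. split; [exact Hr|]. intros u Hu. simpl. apply H1. apply H2. exact Hu.
Qed.

Lemma iter_inj {X} (f g : X -> X) (hg : forall x, g (f x) = x) :
  forall J a b, Nat.iter J f a = Nat.iter J f b -> a = b.
Proof.
  induction J as [|J IH]; simpl; intros a b H; [exact H|].
  apply IH. rewrite <- (hg (Nat.iter J f a)), <- (hg (Nat.iter J f b)), H. reflexivity.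
Qed.

Definition SH {X} (d : X -> X -> R) (f : X -> X) (L delta0 : R) : Prop :=
  forall delta, 0 < delta -> delta <= delta0 ->
      forall xs, pseudo_orbit d f delta xs -> exists x, shadows d f (L * delta) x xs.

Lemma step_lemma {X} (d : X -> X -> R) (hm : is_metric d) f L delta0
  (hsh : SH d f L delta0) (J : nat) (HJ : (1 <= J)%nat) w y eta :
  0 < eta -> eta <= delta0 ->
  d (Nat.iter J f w) (Nat.iter J f y) <= eta ->
  exists z, d z w <= L * eta /\ d (Nat.iter J f z) (Nat.iter J f y) <= L * eta.
Proof.
  intros He1 He2 Hd.
  pose (xi := fun s => if Nat.ltb s J then Nat.iter s f w else Nat.iter s f y).
  assert (Hpo : pseudo_orbit d f eta xi).
  { intro s. unfold xi.
    destruct (Nat.ltb_spec s J); destruct (Nat.ltb_spec (S s) J).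
    - change (f (Nat.iter s f w)) with (Nat.iter (S s) f w). rewrite (d_refl d hm). lra.
    - change (f (Nat.iter s f w)) with (Nat.iter (S s) f w).
      replace J with (S s) in Hd by lia. exact Hd.
    - lia.
    - change (f (Nat.iter s f y)) with (Nat.iter (S s) f y). rewrite (d_refl d hm). lra. }
  destruct (hsh eta He1 He2 xi Hpo) as [z Hz].
  exists z. split.
  - specialize (Hz 0%nat). unfold xi in Hz.
    replace (Nat.ltb 0 J) with true in Hz by (symmetry; apply Nat.ltb_lt; lia).
    exact Hz.
  - specialize (Hz J). unfold xi in Hz. rewrite Nat.ltb_irrefl in Hz. exact Hz.
Qed.

Lemma exact_lemma {X} (d : X -> X -> R) (hm : is_metric d) (hc : metric_compact d)
  f g (hf : metric_continuous d f) (hg : forall x, g (f x) = x) L delta0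
  (hL0 : 0 < L) (hL1 : L < 1)
  (hsh : SH d f L delta0) (J : nat) a y eps :
  0 < eps -> eps <= delta0 ->
  d (Nat.iter J f a) (Nat.iter J f y) <= eps -> d a y <= eps / (1 - L).
Proof.
  intros He1 He2 Hd.
  assert (Hge : eps <= eps / (1 - L)).
  { unfold Rdiv. rewrite <- (Rmult_1_r eps) at 1. apply Rmult_le_compat_l; [lra|].
    rewrite <- Rinv_1. apply Rinv_le_contravar; lra. }
  destruct J as [|J0].
  { simpl in Hd. lra. }
  set (J := S J0) in *.
  assert (HJ : (1 <= J)%nat) by (unfold J; lia).
  pose (P := fun k w => d (Nat.iter J f w) (Nat.iter J f y) <= L ^ k * eps).
  assert (H : forall k w, exists w', P k w -> d w' w <= L ^ S k * eps /\ P (S k) w').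
  { intros k w. destruct (classic (P k w)) as [Hp|Hp].
    - assert (0 < L ^ k) by (apply pow_lt; lra).
      assert (L ^ k <= 1) by (apply pow_le1; lra).
      destruct (step_lemma d hm f L delta0 hsh J HJ w y (L ^ k * eps)) as [z [Hz1 Hz2]].
      + nra.
      + nra.
      + exact Hp.
      + exists z. intros _. unfold P. simpl. rewrite Rmult_assoc. split; assumption.
    - exists w. intro Hp'. contradiction. }
  pose (F := fun k w => proj1_sig (constructive_indefinite_description _ (H k w))).
  assert (HF : forall k w, P k w -> d (F k w) w <= L ^ S k * eps /\ P (S k) (F k w)).
  { intros k w. unfold F. destruct (constructive_indefinite_description _ (H k w)) as [w' Hw'].
    simpl. exact Hw'. }
  pose (ys := fix ys k := match k with O => a | S k' => F k' (ys k') end).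
  assert (Hinv : forall k, P k (ys k) /\ d (ys (S k)) (ys k) <= L ^ S k * eps).
  { induction k as [|k IH].
    - assert (P 0%nat (ys 0%nat)) by (unfold P; change (ys 0%nat) with a; rewrite pow_O; lra).
      split; [assumption|]. apply (HF 0%nat (ys 0%nat) H0).
    - destruct IH as [IH1 IH2].
      assert (P (S k) (ys (S k))) by (apply (HF k (ys k) IH1)).
      split; [assumption|]. apply (HF (S k) (ys (S k)) H0). }
  pose (r := fun k : nat => eps * L ^ S k / (1 - L)).
  assert (Hr0 : forall k, 0 <= r k).
  { intro k. unfold r. assert (0 < L ^ S k) by (apply pow_lt; lra).
    apply Rmult_le_pos; [nra|]. apply Rlt_le, Rinv_0_lt_compat. lra. }
  assert (Hrd : forall m, r m - r (S m) = eps * L ^ S m).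
  { intro m. unfold r. change (L ^ S (S m)) with (L * L ^ S m). field. lra. }
  assert (Htele : forall k j, d (ys k) (ys (k + j)%nat) <= r k - r (k + j)%nat).
  { intros k j. induction j as [|j IH].
    - rewrite Nat.add_0_r, (d_refl d hm). lra.
    - replace (k + S j)%nat with (S (k + j)) by lia.
      pose proof (metric_triangle d hm (ys k) (ys (k + j)%nat) (ys (S (k + j)))).
      pose proof (proj2 (Hinv (k + j)%nat)).
      rewrite (metric_sym d hm) in H1. pose proof (Hrd (k + j)%nat). lra. }
  destruct (completeness d hm hc ys r) as [w Hw].
  { intros k m Hkm. destruct (Nat.le_exists_sub k m Hkm) as [p [-> _]].
    rewrite Nat.add_comm. pose proof (Htele k p). pose proof (Hr0 (k + p)%nat). lra. }
  assert (Heq : Nat.iter J f w = Nat.iter J f y).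
  { apply (proj1 (metric_eq0 d hm _ _)).
    apply Rle_antisym; [|apply (metric_nonneg d hm)].
    apply Rnot_lt_le. intro Hpos.
    set (eta := d (Nat.iter J f w) (Nat.iter J f y)) in *.
    destruct (iter_cont d f hf J w (eta / 2)) as [rho [Hrho Hc]]; [lra|].
    assert (HabsL : Rabs L < 1) by (rewrite Rabs_right; lra).
    destruct (pow_lt_1_zero L HabsL (rho * (1 - L) / eps)) as [N1 HN1].
    { apply Rdiv_lt_0_compat; [nra|lra]. }
    destruct (pow_lt_1_zero L HabsL (eta / 2 / eps)) as [N2 HN2].
    { apply Rdiv_lt_0_compat; lra. }
    set (k := Nat.max N1 N2).
    specialize (HN1 k ltac:(unfold k; lia)). specialize (HN2 k ltac:(unfold k; lia)).
    assert (0 < L ^ k) by (apply pow_lt; lra).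
    rewrite Rabs_right in HN1, HN2 by lra.
    assert (Hrk : r k < rho).
    { unfold r. change (L ^ S k) with (L * L ^ k).
      assert (eps * L ^ k < rho * (1 - L)).
      { apply Rmult_lt_compat_l with (r := eps) in HN1; [|lra].
        replace (eps * (rho * (1 - L) / eps)) with (rho * (1 - L)) in HN1 by (field; lra).
        exact HN1. }
      apply Rmult_lt_reg_r with (1 - L); [lra|].
      replace (eps * (L * L ^ k) / (1 - L) * (1 - L)) with (eps * (L * L ^ k)) by (field; lra).
      assert (0 < eps * L ^ k) by nra. nra. }
    assert (HPk : L ^ k * eps < eta / 2).
    { apply Rmult_lt_compat_r with (r := eps) in HN2; [|lra].
      replace (eta / 2 / eps * eps) with (eta / 2) in HN2 by (field; lra). exact HN2. }
    assert (Hwk : d w (ys k) < rho) by (rewrite (metric_sym d hm); specialize (Hw k); lra).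
    pose proof (Hc (ys k) Hwk) as Hc1.
    pose proof (proj1 (Hinv k)) as Hc2. unfold P in Hc2.
    pose proof (metric_triangle d hm (Nat.iter J f w) (Nat.iter J f (ys k)) (Nat.iter J f y)) as Ht.
    change (d (Nat.iter J f w) (Nat.iter J f y)) with eta in Ht.
    lra. }
  pose proof (iter_inj f g hg J w y Heq) as ->.
  specialize (Hw 0%nat). simpl in Hw. unfold r in Hw.
  assert (eps * (L * 1) / (1 - L) <= eps / (1 - L)).
  { unfold Rdiv. apply Rmult_le_compat_r.
    - apply Rlt_le, Rinv_0_lt_compat. lra.
    - nra. }
  lra.
Qed.

Lemma mix_lemma {X} (d : X -> X -> R) (hm : is_metric d) f L delta0
  (hL0 : 0 < L) (hL1 : L < 1) (hsh : SH d f L delta0) x y N delta :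
  0 < delta -> delta <= delta0 ->
  d (Nat.iter N f x) (Nat.iter N f y) <= delta ->
  forall k, exists xi, pseudo_orbit d f (L ^ k * delta) xi /\
    (forall s, (s + k + 1 <= N)%nat -> xi s = Nat.iter s f x) /\
    (forall s, (N + k <= s)%nat -> xi s = Nat.iter s f y).
Proof.
  intros Hd1 Hd2 Hj k. induction k as [|k IH].
  - exists (fun s => if Nat.leb (s + 1) N then Nat.iter s f x else Nat.iter s f y).
    split; [|split].
    + intro s. rewrite pow_O, Rmult_1_l.
      destruct (Nat.leb_spec (s + 1) N); destruct (Nat.leb_spec (S s + 1) N).
      * change (f (Nat.iter s f x)) with (Nat.iter (S s) f x). rewrite (d_refl d hm). lra.
      * change (f (Nat.iter s f x)) with (Nat.iter (S s) f x).
        replace (S s) with N by lia. exact Hj.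
      * lia.
      * change (f (Nat.iter s f y)) with (Nat.iter (S s) f y). rewrite (d_refl d hm). lra.
    + intros s Hs. destruct (Nat.leb_spec (s + 1) N); [reflexivity|lia].
    + intros s Hs. destruct (Nat.leb_spec (s + 1) N); [lia|reflexivity].
  - destruct IH as [xi [Hpo [Hh Ht]]].
    assert (0 < L ^ k) by (apply pow_lt; lra).
    assert (L ^ k <= 1) by (apply pow_le1; lra).
    destruct (hsh (L ^ k * delta) ltac:(nra) ltac:(nra) xi Hpo) as [z Hz].
    assert (Hpos : 0 <= L ^ S k * delta) by (apply Rmult_le_pos; [apply pow_le; lra | lra]).
    replace (L * (L ^ k * delta)) with (L ^ S k * delta) in Hz by (simpl; ring).
    exists (fun s => if Nat.leb (s + k + 2) N then Nat.iter s f x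
             else if Nat.leb (N + k + 1) s then Nat.iter s f y else Nat.iter s f z).
    split; [|split].
    + intro s.
      destruct (Nat.leb_spec (s + k + 2) N); destruct (Nat.leb_spec (S s + k + 2) N).
      * change (f (Nat.iter s f x)) with (Nat.iter (S s) f x). rewrite (d_refl d hm). lra.
      * destruct (Nat.leb_spec (N + k + 1) (S s)); [lia|].
        change (f (Nat.iter s f x)) with (Nat.iter (S s) f x).
        rewrite <- (Hh (S s)) by lia. rewrite (metric_sym d hm). apply Hz.
      * lia.
      * destruct (Nat.leb_spec (N + k + 1) s); destruct (Nat.leb_spec (N + k + 1) (S s)).
        -- change (f (Nat.iter s f y)) with (Nat.iter (S s) f y). rewrite (d_refl d hm). lra.
        -- lia.
        -- change (f (Nat.iter s f z)) with (Nat.iter (S s) f z).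
           rewrite <- (Ht (S s)) by lia. apply Hz.
        -- change (f (Nat.iter s f z)) with (Nat.iter (S s) f z). rewrite (d_refl d hm). lra.
    + intros s Hs. destruct (Nat.leb_spec (s + k + 2) N); [reflexivity|lia].
    + intros s Hs. destruct (Nat.leb_spec (s + k + 2) N); [lia|].
      destruct (Nat.leb_spec (N + k + 1) s); [reflexivity|lia].
Qed.

Lemma contr_lemma {X} (d : X -> X -> R) (hm : is_metric d) (hc : metric_compact d)
  f g (hf : metric_continuous d f) (hg : forall x, g (f x) = x) L delta0
  (hL0 : 0 < L) (hL1 : L < 1) (hsh : SH d f L delta0) n x y delta :
  0 < delta -> delta <= delta0 ->
  d (Nat.iter (S n) f x) (Nat.iter (S n) f y) <= delta ->
  d x y <= L ^ S n * delta + L ^ S n * delta / (1 - L).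
Proof.
  intros Hd1 Hd2 Hj.
  destruct (mix_lemma d hm f L delta0 hL0 hL1 hsh x y (S n) delta Hd1 Hd2 Hj n)
    as [xi [Hpo [Hh Ht]]].
  assert (0 < L ^ n) by (apply pow_lt; lra).
  assert (L ^ n <= 1) by (apply pow_le1; lra).
  assert (0 < L ^ S n) by (apply pow_lt; lra).
  assert (L ^ S n <= 1) by (apply pow_le1; lra).
  destruct (hsh (L ^ n * delta) ltac:(nra) ltac:(nra) xi Hpo) as [z Hz].
  replace (L * (L ^ n * delta)) with (L ^ S n * delta) in Hz by (simpl; ring).
  pose proof (Hz 0%nat) as Hz0. rewrite Hh in Hz0 by lia. change (d z x <= L ^ S n * delta) in Hz0.
  pose proof (Hz (S n + n)%nat) as Hz1. rewrite Ht in Hz1 by lia.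
  assert (Ha1 : 0 < L ^ S n * delta) by (apply Rmult_lt_0_compat; assumption).
  assert (Ha2 : L ^ S n * delta <= delta0).
  { apply Rle_trans with (1 * delta); [apply Rmult_le_compat_r; lra | lra]. }
  pose proof (exact_lemma d hm hc f g hf hg L delta0 hL0 hL1 hsh (S n + n) z y
    (L ^ S n * delta) Ha1 Ha2 Hz1) as H4.
  pose proof (metric_triangle d hm x z y) as H5. rewrite (metric_sym d hm x z) in H5. lra.
Qed.

Lemma ev_list {A} (l : list A) (P : A -> nat -> Prop) :
  (forall a, In a l -> exists N, forall n, (N <= n)%nat -> P a n) ->
  exists N, forall n, (N <= n)%nat -> forall a, In a l -> P a n.
Proof.
  induction l as [|b l IH]; intros H.
  - exists 0%nat. intros n _ a [].
  - destruct (H b (or_introl eq_refl)) as [N1 H1].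
    destruct IH as [N2 H2]. { intros a Ha. apply H. right. exact Ha. }
    exists (Nat.max N1 N2). intros n Hn a [<-|Ha].
    + apply H1. lia.
    + apply H2; [lia|exact Ha].
Qed.

Lemma pigeon {X} (s l : list X) (R : X -> X -> Prop) :
  NoDup s -> (forall x, In x s -> exists p, In p l /\ R x p) ->
  (forall x y p, In x s -> In y s -> R x p -> R y p -> x = y) ->
  (length s <= length l)%nat.
Proof.
  revert l. induction s as [|x s IH]; intros l Hnd Hex Hinj; simpl; [lia|].
  inversion Hnd as [|x' s' Hxs Hnd']; subst.
  destruct (Hex x (or_introl eq_refl)) as [p [Hp HRp]].
  destruct (in_split p l Hp) as [l1 [l2 ->]].
  assert (length s <= length (l1 ++ l2))%nat.
  { apply IH; [exact Hnd'| |].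
    - intros y Hy. destruct (Hex y (or_intror Hy)) as [q [Hq HRq]].
      exists q. split; [|exact HRq].
      apply in_app_or in Hq. apply in_or_app. destruct Hq as [Hq|[Hq|Hq]]; auto.
      subst q. exfalso. apply Hxs.
      rewrite (Hinj x y p (or_introl eq_refl) (or_intror Hy) HRp HRq). exact Hy.
    - intros a b q Ha Hb. apply Hinj; right; assumption. }
  rewrite length_app in *. simpl. lia.
Qed.

Theorem theorem1p4 (X : Type) (d : X -> X -> R) (f : X -> X) :
  is_metric d -> metric_compact d -> homeomorphism d f ->
  contractive_shadowing d f -> finite_type X.
Proof.
  intros hm hc [hf [g [hg [_ _]]]] [L [hL0 [hL1 [delta0 [hd0 hsh]]]]].
  change (SH d f L delta0) in hsh.
  pose (c := 1 + / (1 - L)).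
  assert (Hc : 0 < c) by (unfold c; assert (0 < / (1 - L)) by (apply Rinv_0_lt_compat; lra); lra).
  destruct (hc X (fun p w => d p w < delta0 / 2)) as [l Hl].
  - intros p w Hw. exists (delta0 / 2 - d p w). split; [lra|].
    intros w' Hw'. pose proof (metric_triangle d hm p w w'). lra.
  - intro w. exists w. rewrite (d_refl d hm). lra.
  - assert (Hbound : forall s : list X, NoDup s -> (length s <= length l)%nat).
    { intros s Hnd.
      destruct (ev_list s (fun x n => forall y, In y s -> x <> y ->
                  L ^ S n * delta0 * c < d x y)) as [N HN].
      { intros x Hx. apply ev_list. intros y Hy.
        destruct (classic (x = y)) as [Heq|Hxy].
        - exists 0%nat. intros n _ H. exfalso. exact (H Heq).
        - assert (Hpos : 0 < d x y).
          { pose proof (metric_nonneg d hm x y). destruct (Req_dec (d x y) 0) as [H0|H0].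
            - exfalso. apply Hxy. apply (proj1 (metric_eq0 d hm x y) H0).
            - lra. }
          assert (HabsL : Rabs L < 1) by (rewrite Rabs_right; lra).
          destruct (pow_lt_1_zero L HabsL (d x y / (delta0 * c))) as [N HN].
          { apply Rdiv_lt_0_compat; [lra|nra]. }
          exists N. intros n Hn _.
          specialize (HN n Hn). rewrite Rabs_right in HN by (apply Rle_ge, pow_le; lra).
          pose proof (pow_S_le L n ltac:(lra) ltac:(lra)).
          assert (L ^ n * (delta0 * c) < d x y).
          { apply Rmult_lt_compat_r with (r := delta0 * c) in HN; [|nra].
            replace (d x y / (delta0 * c) * (delta0 * c)) with (d x y) in HN
              by (field; split; lra). exact HN. }
          assert (0 < delta0 * c) by nra. nra. }
      set (n := N).
      apply (pigeon s l (fun x p => d p (Nat.iter (S n) f x) < delta0 / 2) Hnd).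
      - intros x _. destruct (Hl (Nat.iter (S n) f x)) as [p [Hp1 Hp2]]. exists p. auto.
      - intros x y p Hx Hy Hpx Hpy. apply NNPP. intro Hxy.
        pose proof (HN n (Nat.le_refl _) x Hx y Hy Hxy) as Hlt.
        assert (Hd : d (Nat.iter (S n) f x) (Nat.iter (S n) f y) <= delta0).
        { pose proof (metric_triangle d hm (Nat.iter (S n) f x) p (Nat.iter (S n) f y)).
          rewrite (metric_sym d hm _ p) in H. lra. }
        pose proof (contr_lemma d hm hc f g hf hg L delta0 hL0 hL1 hsh n x y delta0 hd0
                      (Rle_refl _) Hd) as Hc2.
        replace (L ^ S n * delta0 + L ^ S n * delta0 / (1 - L)) with (L ^ S n * delta0 * c)
          in Hc2 by (unfold c; field; lra).
        lra. }
    apply NNPP. intro Hnf.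
    assert (Hlong : forall k, exists s : list X, NoDup s /\ length s = k).
    { induction k as [|k [s [Hs1 Hs2]]].
      - exists nil. split; [constructor|reflexivity].
      - assert (exists x, ~ In x s) as [x Hx].
        { apply not_all_ex_not. intro Hall. apply Hnf. exists s. exact Hall. }
        exists (x :: s). split; [constructor; assumption|simpl; lia]. }
    destruct (Hlong (S (length l))) as [s [Hs1 Hs2]].
    pose proof (Hbound s Hs1). lia.
Qed.
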